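(* Let $(F,\|\cdot\|_F)$ be a finite-dimensional normed space over $K$ and $t>0$, and set $E=(K,|\cdot|_t)\oplus(F,\|\cdot\|_F)$. Then $E$ satisfies (SE) if and only if $F$ satisfies (SE).
   Context: $K$ is a complete non-archimedean non-trivially valued field which is not spherically complete. $(K,|\cdot|_t)$ is $K$ with norm $t|x|$; $\oplus$ denotes the direct sum with norm $\|(a,u)\|=\max(t|a|,\|u\|_F)$. A normed space $E$ satisfies (SE) if for each subspace $D\subseteq E$ and each $f\in D'$ with $\|f\|=1$ there is an extension $\tilde f\in E'$ of $f$ with $\|\tilde f\|=1$ (operator norms). *)

(* Defs.v *)
From HB Require Import structures.
From mathcomp Require Import all_boot all_order all_algebra.
From mathcomp Require Import all_classical all_reals.
Set Implicit Arguments. Unset Strict Implicit. Unset Printing Implicit Defensive.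
Import Order.TTheory GRing.Theory Num.Theory.
Local Open Scope ring_scope.
Local Open Scope classical_set_scope.

Section Defs.
Variables (R : realType) (K : fieldType) (abs : K -> R).

Definition nonarch_abs : Prop :=
  [/\ forall x, 0 <= abs x,
      forall x, abs x = 0 <-> x = 0,
      forall x y, abs (x * y) = abs x * abs y,
      forall x y, abs (x + y) <= Num.max (abs x) (abs y)
    & exists x, abs x != 0 /\ abs x != 1].

Definition abs_cauchy (u : nat -> K) : Prop :=
  forall e : R, 0 < e -> exists N : nat, forall m n : nat,
    (N <= m)%N -> (N <= n)%N -> abs (u m - u n) < e.

Definition abs_converges (u : nat -> K) (l : K) : Prop :=
  forall e : R, 0 < e -> exists N : nat, forall n : nat,
    (N <= n)%N -> abs (u n - l) < e.

Definition abs_complete : Prop :=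
  forall u : nat -> K, abs_cauchy u -> exists l, abs_converges u l.

Definition cball (a : K) (r : R) : set K := [set x | abs (x - a) <= r].

Definition spherically_complete : Prop :=
  forall (a : nat -> K) (r : nat -> R),
    (forall n, 0 < r n) ->
    (forall n, cball (a n.+1) (r n.+1) `<=` cball (a n) (r n)) ->
    exists x, forall n, cball (a n) (r n) x.

Variable (V : lmodType K).

Definition nanorm (N : V -> R) : Prop :=
  [/\ forall x, N x = 0 <-> x = 0,
      forall (a : K) x, N (a *: x) = abs a * N x
    & forall x y, N (x + y) <= Num.max (N x) (N y)].

Definition findim : Prop :=
  exists s : seq V, forall x : V,
    exists c : 'I_(size s) -> K, x = \sum_(i < size s) c i *: s`_i.

Definition subspace (D : set V) : Prop :=
  D 0 /\ forall (a : K) x y, D x -> D y -> D (a *: x + y).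

Definition linear_on (D : set V) (f : V -> K) : Prop :=
  forall (a : K) x y, D x -> D y -> f (a *: x + y) = a * f x + f y.

(* continuity of a linear functional = boundedness *)
Definition bounded_on (N : V -> R) (D : set V) (f : V -> K) : Prop :=
  exists C : R, forall x, D x -> abs (f x) <= C * N x.

Definition opnorm (N : V -> R) (D : set V) (f : V -> K) : R :=
  sup [set r : R | exists x, [/\ D x, x != 0 & r = abs (f x) / N x]].

Definition in_dual (N : V -> R) (D : set V) (f : V -> K) : Prop :=
  linear_on D f /\ bounded_on N D f.

Definition SE (N : V -> R) : Prop :=
  forall (D : set V) (f : V -> K),
    subspace D -> in_dual N D f -> opnorm N D f = 1 ->
    exists g : V -> K,
      [/\ in_dual N setT g, (forall x, D x -> g x = f x) & opnorm N setT g = 1].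

End Defs.

Definition sumnorm (R : realType) (K : fieldType) (abs : K -> R)
  (F : lmodType K) (NF : F -> R) (t : R) (p : (K^o * F)%type) : R :=
  Num.max (t * abs p.1) (NF p.2).

(* Main.v *)
Require Import Defs.
From HB Require Import structures.
From mathcomp Require Import all_boot all_order all_algebra.
From mathcomp Require Import all_classical all_reals.
From mathcomp Require Import lra ring.
Import Order.TTheory GRing.Theory Num.Theory.
Local Open Scope ring_scope.

Local Open Scope classical_set_scope.

Section Basics.
Context {R : realType} {K : fieldType} {abs : K -> R} (habs : nonarch_abs abs).

Lemma abs_ge0 x : 0 <= abs x. Proof. by case: habs. Qed.
Lemma abs0 : abs 0 = 0. Proof. by case: habs => _ h _ _ _; exact: (h 0).2. Qed.
Lemma abs_eq0 x : abs x = 0 -> x = 0. Proof. by case: habs => _ h _ _ _; exact: (h x).1. Qed.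
Lemma absM x y : abs (x * y) = abs x * abs y. Proof. by case: habs. Qed.
Lemma abs_ultra x y : abs (x + y) <= Num.max (abs x) (abs y). Proof. by case: habs. Qed.
Lemma abs_gt0 x : x != 0 -> 0 < abs x.
Proof.
move=> hx; rewrite lt_neqAle abs_ge0 andbT; apply/eqP => h.
by move/eqP: hx; apply; apply: abs_eq0.
Qed.
Lemma abs1 : abs 1 = 1.
Proof.
have h1 : abs 1 != 0 by rewrite gt_eqF // abs_gt0 // oner_eq0.
have : abs 1 * abs 1 = abs 1 * 1 by rewrite -absM !mulr1.
by move/(mulfI h1).
Qed.
Lemma absN1 : abs (-1) = 1.
Proof.
have h2 : abs (-1) * abs (-1) = 1 by rewrite -absM mulrNN mulr1 abs1.
have h0 := abs_ge0 (-1). nra.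
Qed.
Lemma absN x : abs (- x) = abs x.
Proof. by rewrite -mulN1r absM absN1 mul1r. Qed.
Lemma absB x y : abs (x - y) = abs (y - x).
Proof. by rewrite -absN opprB. Qed.
Lemma abs_sub x y : abs (x - y) <= Num.max (abs x) (abs y).
Proof. by rewrite -(absN y) abs_ultra. Qed.
Lemma absV x : x != 0 -> abs (x^-1) = (abs x)^-1.
Proof.
move=> hx; have h : abs x * abs (x^-1) = 1 by rewrite -absM mulfV // abs1.
have hx' : abs x != 0 by rewrite gt_eqF // abs_gt0.
by apply: (mulfI hx'); rewrite h mulfV.
Qed.

Context {V : lmodType K} {N : V -> R} (hN : nanorm abs N).

Lemma N_eq0 x : N x = 0 <-> x = 0. Proof. by case: hN. Qed.
Lemma NZ a x : N (a *: x) = abs a * N x. Proof. by case: hN. Qed.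
Lemma N_ultra x y : N (x + y) <= Num.max (N x) (N y). Proof. by case: hN. Qed.
Lemma N0 : N 0 = 0. Proof. exact/N_eq0. Qed.
Lemma NN x : N (- x) = N x. Proof. by rewrite -scaleN1r NZ absN1 mul1r. Qed.
Lemma N_ge0 x : 0 <= N x.
Proof. by have := N_ultra x (- x); rewrite subrr N0 NN maxxx. Qed.
Lemma N_gt0 x : x != 0 -> 0 < N x.
Proof.
move=> hx; rewrite lt_neqAle N_ge0 andbT; apply/eqP => h.
by move/eqP: hx; apply; apply/N_eq0.
Qed.
Lemma N_sub x y : N (x - y) <= Num.max (N x) (N y).
Proof. by rewrite -(NN y) N_ultra. Qed.

Implicit Types (D : set V) (f : V -> K).
Lemma sub0 {D} : subspace D -> D 0. Proof. by case. Qed.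
Lemma subD {D x y} : subspace D -> D x -> D y -> D (x + y).
Proof. by case=> _ h Dx Dy; rewrite -[x]scale1r; apply: h. Qed.
Lemma subZ {D} a {x} : subspace D -> D x -> D (a *: x).
Proof. by case=> h0 h Dx; rewrite -[a *: x]addr0; apply: h. Qed.
Lemma subN {D x} : subspace D -> D x -> D (- x).
Proof. by move=> sD Dx; rewrite -scaleN1r; apply: subZ. Qed.
Lemma subB {D x y} : subspace D -> D x -> D y -> D (x - y).
Proof. by move=> sD Dx Dy; apply: subD => //; apply: subN. Qed.

Lemma lin0 {D f} : subspace D -> linear_on D f -> f 0 = 0.
Proof.
move=> sD lf; have := lf 1 0 0 (sub0 sD) (sub0 sD).
rewrite scaler0 addr0 mul1r => h.
by apply: (addrI (f 0)); rewrite -h addr0.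
Qed.
Lemma linD {D f x y} : subspace D -> linear_on D f -> D x -> D y -> f (x + y) = f x + f y.
Proof. by move=> sD lf Dx Dy; rewrite -{1}[x]scale1r lf // mul1r. Qed.
Lemma linZ {D f} a {x} : subspace D -> linear_on D f -> D x -> f (a *: x) = a * f x.
Proof.
move=> sD lf Dx; rewrite -[a *: x]addr0 lf //; last exact: sub0.
by rewrite (lin0 sD lf) addr0.
Qed.
Lemma linN {D f x} : subspace D -> linear_on D f -> D x -> f (- x) = - f x.
Proof. by move=> sD lf Dx; rewrite -scaleN1r (linZ _ sD lf) // mulN1r. Qed.
Lemma linB {D f x y} : subspace D -> linear_on D f -> D x -> D y -> f (x - y) = f x - f y.
Proof.
by move=> sD lf Dx Dy; rewrite (linD sD lf) ?(linN sD lf) //; apply: subN.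
Qed.

Definition ratios (D : set V) (f : V -> K) :=
  [set r : R | exists x, [/\ D x, x != 0 & r = abs (f x) / N x]].

Lemma opnormE D f : opnorm abs N D f = sup (ratios D f). Proof. by []. Qed.

Lemma ratios_ub D f C : (forall x, D x -> abs (f x) <= C * N x) ->
  forall r, ratios D f r -> r <= C.
Proof.
move=> hC r [x [Dx x0 ->]]; rewrite ler_pdivrMr ?N_gt0 //; exact: hC.
Qed.

Lemma opnorm_ub {D f x} : bounded_on abs N D f -> D x -> x != 0 ->
  abs (f x) / N x <= opnorm abs N D f.
Proof.
move=> [C hC] Dx x0; rewrite opnormE; apply: ub_le_sup.
  by exists C; move=> r; apply: ratios_ub.
by exists x.
Qed.

Lemma opnorm_le D f B : 0 <= B -> (forall x, D x -> abs (f x) <= B * N x) ->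
  opnorm abs N D f <= B.
Proof.
move=> B0 hB; rewrite opnormE.
have [->|/set0P ne] := eqVneq (ratios D f) set0; first by rewrite sup0.
by apply: ge_sup => // r; apply: ratios_ub.
Qed.

Lemma opnorm_ge0 D f : 0 <= opnorm abs N D f.
Proof.
rewrite opnormE.
have [->|/set0P [r hr]] := eqVneq (ratios D f) set0; first by rewrite sup0.
have [hs|hs] := pselect (has_sup (ratios D f)).
  apply: le_trans (sup_upper_bound hs hr).
  by case: hr => x [_ _ ->]; rewrite divr_ge0 ?abs_ge0 ?N_ge0.
by rewrite sup_out.
Qed.

Lemma opnorm1_bound D f : subspace D -> linear_on D f -> bounded_on abs N D f ->
  opnorm abs N D f = 1 -> forall x, D x -> abs (f x) <= N x.
Proof.
move=> sD lf bf h1 x Dx.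
have [->|x0] := eqVneq x 0; first by rewrite (lin0 sD lf) abs0 N0.
by have := opnorm_ub bf Dx x0; rewrite h1 ler_pdivrMr ?N_gt0 // mul1r.
Qed.

Lemma opnorm_ext D D' f g : opnorm abs N D f = 1 -> D `<=` D' ->
  (forall x, D x -> g x = f x) -> (forall x, D' x -> abs (g x) <= N x) ->
  opnorm abs N D' g = 1.
Proof.
move=> h1 DD' gf hg; apply/eqP; rewrite eq_le; apply/andP; split.
  by apply: opnorm_le => // x /hg; rewrite mul1r.
move: h1; rewrite !opnormE => <-.
have [e0|/set0P ne] := eqVneq (ratios D f) set0.
  by move: (@sup0 R); rewrite -e0 => -> /=; rewrite -opnormE opnorm_ge0.
apply: ge_sup => // r [x [Dx x0 ->]]; apply: ub_le_sup.
  by exists 1 => s; apply: ratios_ub => y /hg; rewrite mul1r.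
by exists x; split => //; [apply: DD' | rewrite gf].
Qed.

End Basics.

Local Open Scope classical_set_scope.

Lemma small_ev {R : realType} {r : R} : 0 < r ->
  exists M : nat, forall n, (M <= n)%N -> (n.+1%:R)^-1 < r.
Proof.
move=> r0; exists (Num.Def.archi_bound (r^-1)) => n hn.
have ri : 0 < r^-1 by rewrite invr_gt0.
have h := archi_boundP (ltW ri).
rewrite invf_plt ?posrE //; apply: (lt_le_trans h).
by rewrite ler_nat; apply: leq_trans hn _.
Qed.

Lemma max_le_mul {R : realType} (A a b C : R) : A * a <= C -> A * b <= C ->
  A * Num.max a b <= C.
Proof. by move=> ha hb; case: (leP a b). Qed.

Lemma max_lt_mul {R : realType} (A a b C : R) : A * a < C -> A * b < C ->
  A * Num.max a b < C.
Proof. by move=> ha hb; case: (leP a b). Qed.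

Lemma mul_lt_of {R : realType} (A a e : R) : 0 <= A -> 0 <= a -> a < e / (A + 1) ->
  A * a < e.
Proof. move=> A0 a0; rewrite ltr_pdivlMr; last lra. move=> h; nra. Qed.

Lemma lemr {R : realType} {a b c : R} : 0 <= c -> a <= b -> a * c <= b * c.
Proof. move=> *; nra. Qed.
Lemma leml {R : realType} {a b c : R} : 0 <= c -> a <= b -> c * a <= c * b.
Proof. move=> *; nra. Qed.

Lemma idsub {K : fieldType} {V : lmodType K} (x a b : V) : a - b = (x - b) - (x - a).
Proof. by rewrite opprB [RHS]addrC addrA subrK. Qed.

Section OneStep.
Context {R : realType} {K : fieldType} {abs : K -> R} (habs : nonarch_abs abs).
Variable (hcomp : abs_complete abs).
Context {V : lmodType K} {N : V -> R} (hN : nanorm abs N).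
Implicit Types (S : set V) (k : V -> K).

Lemma find_c S k (A B : R) x : 0 <= A -> A < B -> subspace S -> linear_on S k ->
  (forall s, S s -> abs (k s) <= A * N s) -> ~ S x ->
  exists c, forall s, S s -> abs (c + k s) <= B * N (x + s).
Proof.
move=> A0 AB sS lk kA nSx.
have B0 : 0 < B by apply: le_lt_trans AB.
pose Vs := [set r | exists s, S s /\ r = N (x - s)].
have neV : Vs !=set0 by exists (N (x - 0)); exists 0; split => //; exact: sub0.
have lbV : lbound Vs 0 by move=> r [s [_ ->]]; exact: (N_ge0 habs hN).
have hinf : has_inf Vs by split => //; exists 0.
have geV : forall s, S s -> inf Vs <= N (x + s).
  move=> s Ss; apply: ge_inf; first by exists 0.
  by exists (- s); split; [exact: subN | rewrite opprK].
have d0 : 0 <= inf Vs by apply: lb_le_inf.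
have [dpos|dle] := ltP 0 (inf Vs).
- have [s0 [Ss0 hs0]] : exists s0, S s0 /\ A * N (x - s0) <= B * inf Vs.
    have [A0'|Apos] := eqVneq A 0.
      exists 0; split; first exact: sub0.
      by rewrite A0' mul0r; apply: mulr_ge0 => //; exact: ltW.
    have Ap : 0 < A by rewrite lt_neqAle eq_sym Apos A0.
    have eps0 : 0 < B * inf Vs / A - inf Vs.
      by rewrite subr_gt0 ltr_pdivlMr // [B * _]mulrC ltr_pM2l.
    have [r [s [Ss ->]] hr] := inf_adherent eps0 hinf.
    exists s; split => //.
    move: hr; rewrite addrCA subrr addr0 ltr_pdivlMr // mulrC => hr; exact: ltW.
  exists (k s0) => s Ss.
  rewrite -(linD sS lk) //.
  apply: le_trans (kA _ (subD sS Ss0 Ss)) _.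
  have -> : s0 + s = (x + s) - (x - s0) by rewrite -{1}(opprK s) (idsub x _ (- s)) opprK.
  apply: le_trans (leml A0 (N_sub habs hN _ _)) _.
  apply: max_le_mul.
    by apply: lemr; [exact: (N_ge0 habs hN) | exact: ltW].
  by apply: (le_trans hs0); apply: leml; [exact: ltW | exact: geV].
- have d00 : inf Vs = 0 by apply/eqP; rewrite eq_le dle d0.
  have appr : forall n : nat, exists s, S s /\ N (x - s) < (n.+1%:R)^-1.
    move=> n; have [|r [s [Ss ->]] hr] := inf_adherent (_ : 0 < (n.+1%:R)^-1) hinf.
      by rewrite invr_gt0 ltr0Sn.
    by exists s; split => //; rewrite d00 add0r in hr.
  have [sq hsq] := choice appr.
  pose u n := k (sq n).
  have Cu : abs_cauchy abs u.
    move=> e e0.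
    have eA : 0 < e / (A + 1) by apply: divr_gt0 => //; lra.
    have [M hM] := small_ev eA.
    exists M => m n hm hn.
    rewrite /u -(linB sS lk (hsq m).1 (hsq n).1).
    apply: le_lt_trans (kA _ (subB sS (hsq m).1 (hsq n).1)) _.
    rewrite (idsub x).
    apply: le_lt_trans (leml A0 (N_sub habs hN _ _)) _.
    apply: max_lt_mul; apply: mul_lt_of => //; try exact: (N_ge0 habs hN).
      exact: lt_trans (hsq n).2 (hM n hn).
    exact: lt_trans (hsq m).2 (hM m hm).
  have [c hc] := hcomp _ Cu.
  exists c => s Ss.
  have r0 : 0 < N (x + s).
    apply: (N_gt0 habs hN); apply/eqP => h; apply: nSx.
    by move/eqP: h; rewrite addr_eq0 => /eqP ->; exact: subN.
  have [M1 hM1] := hc _ (mulr_gt0 B0 r0).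
  have [M2 hM2] := small_ev r0.
  pose n := maxn M1 M2.
  have hn1 := hM1 n (leq_maxl _ _).
  have hn2 := hM2 n (leq_maxr _ _).
  have e2 : c + k s = (c - u n) + k (sq n + s).
    by rewrite (linD sS lk (hsq n).1 Ss) /u addrA subrK.
  rewrite e2; apply: le_trans (abs_ultra habs _ _) _.
  rewrite ge_max; apply/andP; split.
    by rewrite (absB habs); exact: ltW.
  apply: le_trans (kA _ (subD sS (hsq n).1 Ss)) _.
  have -> : sq n + s = (x + s) - (x - sq n) by rewrite -{1}(opprK s) (idsub x _ (- s)) opprK.
  have hN' : N (x - sq n) <= N (x + s) := ltW (lt_trans (hsq n).2 hn2).
  apply: le_trans (leml A0 (N_sub habs hN _ _)) _.
  rewrite (max_idPl hN'); by apply: lemr; [exact: (N_ge0 habs hN) | exact: ltW].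
Qed.

End OneStep.

Local Open Scope classical_set_scope.

Section Ext.
Context {R : realType} {K : fieldType} {abs : K -> R} (habs : nonarch_abs abs).
Variable (hcomp : abs_complete abs).
Context {V : lmodType K} {N : V -> R} (hN : nanorm abs N).
Implicit Types (S : set V) (k : V -> K).

Lemma one_step S k (A B : R) x : 0 <= A -> A < B -> subspace S -> linear_on S k ->
  (forall s, S s -> abs (k s) <= A * N s) ->
  exists S' k', [/\ subspace S', S `<=` S', S' x, linear_on S' k' &
     (forall s, S s -> k' s = k s) /\ forall s, S' s -> abs (k' s) <= B * N s].
Proof.
move=> A0 AB sS lk kA.
have [Sx|nSx] := pselect (S x).
  exists S, k; split => //; split => // s Ss; apply: le_trans (kA s Ss) _.
  by apply: lemr; [exact: (N_ge0 habs hN) | exact: ltW].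
have [c hc] := find_c habs hcomp hN _ _ _ _ _ A0 AB sS lk kA nSx.
have uniq : forall y l1 l2, S (y - l1 *: x) -> S (y - l2 *: x) -> l1 = l2.
  move=> y l1 l2 h1 h2; have [//|hne] := eqVneq l1 l2.
  have : S ((l1 - l2)^-1 *: ((y - l2 *: x) - (y - l1 *: x))).
    by apply: subZ => //; apply: subB.
  by rewrite -idsub -scalerBl scalerA mulVf ?scale1r ?subr_eq0.
pose P y := [set l : K | S (y - l *: x)].
pose lam y := xget 0 (P y).
have lamE : forall y l, S (y - l *: x) -> lam y = l.
  by move=> y l h; apply: xget_unique => // l' h'; exact: uniq h' h.
pose S' := [set y | exists l, S (y - l *: x)].
pose k' y := lam y * c + k (y - lam y *: x).
have lamS : forall y, S' y -> S (y - lam y *: x).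
  by move=> y [l h]; rewrite (lamE _ _ h).
have comb : forall a y z ly lz, (a *: y + z) - (a * ly + lz) *: x
    = a *: (y - ly *: x) + (z - lz *: x).
  by move=> a y z ly lz; rewrite scalerDl -scalerA scalerBr opprD addrACA.
exists S', k'; split.
- split.
    by exists 0; rewrite scale0r subr0; exact: sub0.
  move=> a y z [ly hy] [lz hz]; exists (a * ly + lz); rewrite comb.
  by apply: subD => //; apply: subZ.
- by move=> s Ss; exists 0; rewrite scale0r subr0.
- by exists 1; rewrite scale1r subrr; exact: sub0.
- move=> a y z [ly hy] [lz hz].
  have hyz : S ((a *: y + z) - (a * ly + lz) *: x).
    by rewrite comb; apply: subD => //; apply: subZ.
  rewrite /k' (lamE _ _ hy) (lamE _ _ hz) (lamE _ _ hyz) comb.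
  rewrite (linD sS lk) ?(linZ _ sS lk) //; last by apply: subZ.
  ring.
- split.
  + move=> s Ss; have h0 : S (s - 0 *: x) by rewrite scale0r subr0.
    by rewrite /k' (lamE _ _ h0) mul0r add0r scale0r subr0.
  + move=> y Sy; have hy := lamS y Sy; rewrite /k'.
    move: hy; set l := lam y => hy.
    have [l0|lnz] := eqVneq l 0.
      rewrite l0 mul0r add0r scale0r subr0; rewrite l0 scale0r subr0 in hy.
      apply: le_trans (kA _ hy) _.
      by apply: lemr; [exact: (N_ge0 habs hN) | exact: ltW].
    move: hy; set s := y - l *: x => hy.
    have ey : y = l *: (x + l^-1 *: s).
      by rewrite scalerDr scalerA mulfV // scale1r /s addrC subrK.
    have ek : l * c + k s = l * (c + k (l^-1 *: s)).
      by rewrite (linZ _ sS lk hy) mulrDr mulrA mulfV // mul1r.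
    have -> : N y = abs l * N (x + l^-1 *: s) by rewrite -(NZ hN) -ey.
    have hl := abs_ge0 habs l.
    have hcs := hc _ (subZ (l^-1) sS hy).
    rewrite ek (absM habs). nra.
Qed.

Lemma ext_list (L : seq V) : forall S k (A B : R), 0 <= A -> A < B -> subspace S ->
  linear_on S k -> (forall s, S s -> abs (k s) <= A * N s) ->
  exists S' k', [/\ subspace S', S `<=` S', (forall y, y \in L -> S' y),
    linear_on S' k' & (forall s, S s -> k' s = k s)
    /\ forall s, S' s -> abs (k' s) <= B * N s].
Proof.
elim: L => [|x L IH] S k A B A0 AB sS lk kA.
  exists S, k; split => //; split => // s Ss; apply: le_trans (kA s Ss) _.
  by apply: lemr; [exact: (N_ge0 habs hN) | exact: ltW].
have h1 : A < (A + B) / 2 by lra.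
have h2 : 0 <= (A + B) / 2 by lra.
have h3 : (A + B) / 2 < B by lra.
have [S1 [k1 [sS1 SS1 S1x lk1 [ek1 kB1]]]] := one_step _ _ _ _ x A0 h1 sS lk kA.
have [S2 [k2 [sS2 S12 LS2 lk2 [ek2 kB2]]]] := IH S1 k1 _ _ h2 h3 sS1 lk1 kB1.
exists S2, k2; split => //.
- by move=> s Ss; apply: S12; apply: SS1.
- by move=> y; rewrite in_cons => /orP [/eqP -> | /LS2 //]; exact: S12.
- by split => // s Ss; rewrite ek2 ?ek1 //; apply: SS1.
Qed.

Lemma span_in S (s : seq V) : subspace S -> (forall y, y \in s -> S y) ->
  forall c : 'I_(size s) -> K, S (\sum_(i < size s) c i *: s`_i).
Proof.
move=> sS hs c; apply: (big_ind S) => [|a b Sa Sb|i _].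
- exact: sub0.
- exact: subD.
- by apply: subZ => //; apply: hs; apply: mem_nth.
Qed.

Lemma ext_le1 (hSE : SE abs N) (hfd : findim V) S k : subspace S ->
  linear_on S k -> (forall s, S s -> abs (k s) <= N s) ->
  exists H, [/\ linear_on setT H, (forall s, S s -> H s = k s)
    & forall y, abs (H y) <= N y].
Proof.
move=> sS lk hk.
have bk : bounded_on abs N S k by exists 1 => s /hk; rewrite mul1r.
have sT : subspace (@setT V) by [].
have [o1|o1] := eqVneq (opnorm abs N S k) 1.
  have [g [[lg bg] eg og]] := hSE S k sS (conj lk bk) o1.
  by exists g; split => // y; exact: (opnorm1_bound habs hN _ _ sT lg bg og y I).
set A := opnorm abs N S k in o1.
have A0 : 0 <= A by apply: (opnorm_ge0 habs hN).
have A1 : A < 1.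
  rewrite lt_neqAle o1 /=; apply: (opnorm_le habs hN) => // s Ss; rewrite mul1r; exact: hk.
have kA : forall s, S s -> abs (k s) <= A * N s.
  move=> s Ss; have [->|s0] := eqVneq s 0.
    by rewrite (lin0 sS lk) abs0 // (N0 hN) mulr0.
  have := opnorm_ub habs hN bk Ss s0; rewrite -/A ler_pdivrMr //.
  exact: (N_gt0 habs hN).
case: hfd => L hL.
have [S' [k' [sS' SS' LS' lk' [ek' kB]]]] := ext_list L _ _ _ _ A0 A1 sS lk kA.
have allS' : forall y, S' y.
  by move=> y; have [c ->] := hL y; apply: span_in.
exists k'; split.
- by move=> a y z _ _; apply: lk'; apply: allS'.
- exact: ek'.
- by move=> y; rewrite -[N y]mul1r; apply: kB; apply: allS'.
Qed.

End Ext.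

Local Open Scope classical_set_scope.

Lemma maxM {R : realType} (c x y : R) : 0 <= c -> c * Num.max x y = Num.max (c * x) (c * y).
Proof.
move=> c0; case: (leP x y) => h; case: (leP (c * x) (c * y)) => h' //; nra.
Qed.

Lemma max_mono {R : realType} (x y x' y' : R) : x <= x' -> y <= y' ->
  Num.max x y <= Num.max x' y'.
Proof. by move=> *; case: (leP x y); case: (leP x' y') => *; lra. Qed.

Lemma le_maxl' {R : realType} (x y : R) : x <= Num.max x y.
Proof. by case: (leP x y) => *; lra. Qed.
Lemma le_maxr' {R : realType} (x y : R) : y <= Num.max x y.
Proof. by case: (leP x y) => *; lra. Qed.

Section Sum.
Context {R : realType} {K : fieldType} {abs : K -> R} (habs : nonarch_abs abs).
Context {F : lmodType K} {NF : F -> R} (hNF : nanorm abs NF).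
Variables (t : R) (ht : 0 < t).

Local Notation NE := (sumnorm abs NF t).

Lemma NE_nanorm : nanorm abs NE.
Proof.
split.
- move=> [a u]; rewrite /sumnorm /=; split.
    move=> h.
    have h1 : t * abs a <= 0 by rewrite -h le_maxl'.
    have h2 : NF u <= 0 by rewrite -h le_maxr'.
    have ha := abs_ge0 habs a; have hu := N_ge0 habs hNF u.
    have ea1 : abs a <= 0.
      by rewrite -(pmulr_rle0 _ ht).
    have ea : abs a = 0 by lra.
    have eu : NF u = 0 by lra.
    by rewrite (abs_eq0 habs _ ea) ((N_eq0 hNF u).1 eu).
  by case=> -> ->; rewrite (abs0 habs) (N0 hNF) mulr0 maxxx.
- move=> c [a u]; rewrite /sumnorm /= (NZ hNF).
  change (c *: a) with (c * a).
  by rewrite (absM habs) maxM ?(abs_ge0 habs) // mulrCA.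
- move=> [a u] [b v]; rewrite /sumnorm /=.
  apply: le_trans (max_mono _ _ _ _ (leml (ltW ht) (abs_ultra habs a b)) (N_ultra hNF u v)) _.
  rewrite maxM; last exact: ltW.
  case: (leP (t * abs a) (t * abs b)); case: (leP (NF u) (NF v));
    case: (leP (t * abs a) (NF u)); case: (leP (t * abs b) (NF v)); 
    move=> *; rewrite /Num.max /=; repeat case: ifP => /= ?; lra.
Qed.

End Sum.


Local Close Scope classical_set_scope.

Theorem mainTheorem13 (R : realType) (K : fieldType) (abs : K -> R)
  (habs : nonarch_abs abs) (hcomp : abs_complete abs)
  (hnsc : ~ spherically_complete abs)
  (F : lmodType K) (NF : F -> R) (hNF : nanorm abs NF) (hfd : findim F)
  (t : R) (ht : 0 < t) :
  SE abs (sumnorm abs NF t) <-> SE abs NF.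
Proof.
Local Open Scope classical_set_scope.
have hNE := NE_nanorm habs hNF t ht.
set NE := sumnorm abs NF t in hNE *.
have NE0 : forall u, NE (0, u) = NF u.
  move=> u; rewrite /NE /sumnorm /= (abs0 habs) mulr0.
  exact/max_idPr/(N_ge0 habs hNF).
have pairC : forall (a : K) (p q : (K^o * F)%type),
    a *: p + q = ((a * p.1 + q.1 : K^o), a *: p.2 + q.2) by [].
split.
- move=> hE D f sD [lf bf] o1.
  pose DE : set (K^o * F)%type := [set p | p.1 = 0 /\ D p.2].
  pose fE (p : (K^o * F)%type) := f p.2.
  have sDE : subspace DE.
    split; first by split => //; exact: sub0.
    move=> a p q [p1 Dp] [q1 Dq]; rewrite pairC; split => /=.
      by rewrite p1 q1 mulr0 addr0.
    by case: sD => _; apply.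
  have lfE : linear_on DE fE by move=> a p q [_ Dp] [_ Dq]; exact: lf.
  have NEDE : forall p, DE p -> NE p = NF p.2.
    by move=> [a u] [/= -> _]; rewrite NE0.
  have bfE : bounded_on abs NE DE fE.
    by case: bf => C hC; exists C => p Dp; rewrite NEDE //; apply: hC; case: Dp.
  have oE : opnorm abs NE DE fE = 1.
    rewrite -o1 /opnorm; congr sup; apply/seteqP; split => r [x [Dx x0 ->]].
      exists x.2; split; first by case: Dx.
        apply: contra x0 => /eqP x20; apply/eqP.
        case: x Dx x20 => a u [/= a0 _] /= u0.
        by rewrite a0 u0.
      by rewrite NEDE.
    exists ((0 : K^o), x); split => //.
      by apply: contra x0 => /eqP [] ->.
    by rewrite NE0.
  have [g [[lg bg] eg og]] := hE DE fE sDE (conj lfE bfE) oE.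
  have gb := opnorm1_bound habs hNE _ _ (_ : subspace setT) lg bg og.
  pose gF u := g ((0 : K^o), u).
  have gFb : forall u, abs (gF u) <= NF u.
    by move=> u; rewrite -NE0; apply: gb.
  have gFe : forall u, D u -> gF u = f u.
    by move=> u Du; rewrite /gF eg.
  exists gF; split.
  + split.
      move=> a x y _ _; rewrite /gF.
      have -> : ((0 : K^o), a *: x + y) = a *: ((0 : K^o), x) + (0, y).
        by rewrite pairC /= mulr0 addr0.
      by rewrite lg.
    by exists 1 => u _; rewrite mul1r.
  + exact: gFe.
  + apply: (opnorm_ext habs hNF D setT f gF o1).
    * by move=> u.
    * exact: gFe.
    * by move=> u _; apply: gFb.
- move=> hF D f sD [lf bf] o1.
  have fb := opnorm1_bound habs hNE _ _ sD lf bf o1.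
  have Ext := ext_le1 habs hcomp hNF hF hfd.
  suff [G [lG eG bG]] : exists G, [/\ linear_on setT G,
      (forall p, D p -> G p = f p) & forall p, abs (G p) <= NE p].
    exists G; split => //.
      by split => //; exists 1 => p _; rewrite mul1r.
    apply: (opnorm_ext habs hNE D setT f G o1).
    * by move=> p.
    * exact: eG.
    * by move=> p _; apply: bG.
  have [[y1 [Dy1 hy1]] | hno] :=
    pselect (exists p, D p /\ NF p.2 < t * abs p.1).
  +
    pose W := [set u | D ((0 : K^o), u)].
    pose h u := f ((0 : K^o), u).
    have sW : subspace W.
      split; first exact: (sub0 sD).
      move=> a u v Du Dv; change (D ((0 : K^o), a *: u + v)).
      have -> : ((0 : K^o), a *: u + v) = a *: ((0 : K^o), u) + (0, v).
        by rewrite pairC /= mulr0 addr0.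
      by case: sD => _; apply.
    have lh : linear_on W h.
      move=> a u v Du Dv; rewrite /h.
      have -> : ((0 : K^o), a *: u + v) = a *: ((0 : K^o), u) + (0, v).
        by rewrite pairC /= mulr0 addr0.
      by rewrite lf.
    have hb : forall u, W u -> abs (h u) <= NF u.
      by move=> u Wu; rewrite -NE0; apply: fb.
    have [H [lH eH bH]] := Ext W h sW lh hb.
    case: y1 Dy1 hy1 => a1 u1 Dy1 /= hy1.
    have a1nz : a1 != 0.
      apply/eqP => a10; move: hy1; rewrite a10 (abs0 habs) mulr0.
      by rewrite ltNge (N_ge0 habs hNF).
    pose g := (f (a1, u1) - H u1) / a1.
    have gt : abs g <= t.
      rewrite /g (absM habs) (absV habs) // ler_pdivrMr ?(abs_gt0 habs) //.
      apply: le_trans (abs_sub habs _ _) _.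
      have e1 : NE (a1, u1) = t * abs a1.
        by rewrite /NE /sumnorm /=; apply/max_idPl/ltW.
      rewrite ge_max; apply/andP; split.
        by rewrite -e1; apply: fb.
      apply: le_trans (ltW hy1).
      exact: bH.
    exists (fun p : (K^o * F)%type => p.1 * g + H p.2); split.
    * move=> a p q _ _; rewrite pairC /=.
      rewrite (lH a _ _ I I).
      change (a *: p.1) with (a * p.1); ring.
    * move=> [p1 p2] Dp /=.
      pose mu := p1 / a1.
      pose q2 := p2 - mu *: u1.
      have Wq : W q2.
        change (D ((0 : K^o), q2)).
        have -> : ((0 : K^o), q2) = (- mu) *: (a1, u1) + (p1, p2).
          rewrite pairC /=; congr pair.
            by rewrite /mu mulNr divfK // addNr.
          by rewrite /q2 scaleNr addrC.
        by case: sD => _; apply.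
      have ep : (p1, p2) = mu *: (a1, u1) + ((0 : K^o), q2).
        rewrite pairC /=; congr pair.
          by rewrite /mu divfK // addr0.
        by rewrite /q2 addrC subrK.
      rewrite ep lf //.
      have -> : p2 = mu *: u1 + q2 by rewrite /q2 addrC subrK.
      rewrite (lH _ _ _ I I) (eH _ Wq) /h /g /mu.
      field; exact: a1nz.
    * move=> [p1 p2] /=.
      apply: le_trans (abs_ultra habs _ _) _.
      rewrite /NE /sumnorm /=; apply: max_mono.
        rewrite (absM habs) mulrC; apply: lemr => //; exact: abs_ge0.
      exact: bH.
  +
    have hB : forall p, D p -> t * abs p.1 <= NF p.2.
      move=> p Dp; rewrite leNgt; apply/negP => hlt; apply: hno.
      by exists p.
    have uniqa : forall a a' u, D (a, u) -> D (a', u) -> a = a'.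
      move=> a a' u Da Da'.
      have : D ((-1) *: ((a' : K^o), u) + (a, u)) by case: sD => _; apply.
      rewrite pairC /= mulN1r scaleN1r addNr => /hB /=.
      rewrite (N0 hNF) => hle.
      have h0 := abs_ge0 habs (- a' + a).
      have h1 : abs (- a' + a) <= 0 by rewrite -(pmulr_rle0 _ ht).
      have : abs (- a' + a) = 0 by lra.
      move/(abs_eq0 habs)/eqP; rewrite addrC subr_eq0 => /eqP.
      by [].
    pose S := [set u | exists a, D (a, u)].
    pose aof u := xget (0 : K^o) [set a | D (a, u)].
    have aofE : forall a u, D (a, u) -> aof u = a.
      move=> a u Dau; apply: xget_unique => // b Dbu.
      exact: uniqa Dbu Dau.
    pose k u := f (aof u, u).
    have sS : subspace S.
      split; first by exists 0; exact: (sub0 sD).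
      move=> c u v [a Da] [b Db]; exists (c * a + b).
      have := (sD.2 c _ _ Da Db); by rewrite pairC.
    have lk : linear_on S k.
      move=> c u v [a Da] [b Db]; rewrite /k.
      have Dc : D (c *: ((a : K^o), u) + (b, v)) by case: sD => _; apply.
      have Dc' := Dc; rewrite pairC /= in Dc'.
      rewrite (aofE _ _ Dc') (aofE _ _ Da) (aofE _ _ Db).
      by rewrite -(lf c _ _ Da Db) pairC.
    have hk : forall u, S u -> abs (k u) <= NF u.
      move=> u [a Da]; rewrite /k (aofE _ _ Da).
      apply: le_trans (fb _ Da) _.
      rewrite /NE /sumnorm /= ge_max lexx andbT; exact: (hB _ Da).
    have [H [lH eH bH]] := Ext S k sS lk hk.
    exists (fun p : (K^o * F)%type => H p.2); split.
    * move=> c p q _ _; rewrite pairC /=; exact: lH.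
    * move=> [a u] Dau /=; rewrite eH; last by exists a.
      by rewrite /k (aofE _ _ Dau).
    * move=> [a u] /=; apply: le_trans (bH u) _.
      by rewrite /NE /sumnorm /=; exact: le_maxr'.
Qed.
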